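(* Let $0<\theta<1$, let $\rho,\tau$ be positive integers with $\rho\le\tau$, and let $m$ be a positive integer with $m\neq 2^\beta$ for every integer $\beta\ge0$. Put $T=2^{\lceil\lg m\rceil}-m-1$. Then $$L_m^{\rho/\tau}(\theta)=\int_{-\infty}^{\infty}\ell_m^{\rho/\tau}(\varepsilon)\,f_\theta(\varepsilon)\,d\varepsilon = 1+\lfloor\lg m\rfloor+\frac{1}{2}\,\frac{\theta^{(T+1)/2}}{1-\theta^{m/2}}\left(\theta^{\frac{\rho}{2\tau}}+\theta^{-\frac{\rho}{2\tau}}\right).$$
   Context: $\lg$ denotes $\log_2$. The Laplace density with parameter $\theta\in(0,1)$ is $f_\theta(\varepsilon)=-\frac{\ln\theta}{2}\theta^{|\varepsilon|}$, $\varepsilon\in\mathbb{R}$. The generalized Rice mapping $M:\mathbb{R}\to\mathbb{Z}_{\ge0}$ is $M(\varepsilon)=\lfloor 2\varepsilon\rfloor$ if $\varepsilon\ge 0$ and $M(\varepsilon)=-\lfloor 2\varepsilon\rfloor-1$ if $\varepsilon<0$. For a positive integer $m$, the Golomb codeword of a non-negative integer $N$ consists of $j=\lfloor N/m\rfloor$ in unary ($j+1$ bits) followed by $k=N \bmod m$ in minimal binary, which uses $\lfloor\lg m\rfloor$ bits if $k<2^{\lceil\lg m\rceil}-m$ and $\lceil\lg m\rceil$ bits otherwise; let $\lambda_m(N)$ be the total number of bits. The (finest-precision) code length of a real residual $\varepsilon$ is $\ell_m(\varepsilon)=\lambda_m(M(\varepsilon))$. For positive integers $\rho\le\tau$ (precision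 $\rho/\tau$), the code length assigned to the real residual $\varepsilon$ at precision $\rho/\tau$ is modeled as the finest-precision assignment shifted left by $\rho/(2\tau)$: $\ell_m^{\rho/\tau}(\varepsilon)=\ell_m(\varepsilon+\rho/(2\tau))$. $L_m^{\rho/\tau}(\theta)$ denotes the average code length under the Laplace density, as in the claim. *)

(* Defs.v *)
From mathcomp Require Import all_boot all_order all_algebra.
From mathcomp Require Import all_classical all_reals all_analysis.
Set Implicit Arguments. Unset Strict Implicit. Unset Printing Implicit Defensive.
Import Order.TTheory GRing.Theory Num.Theory.
Local Open Scope ring_scope.

Definition flg (m : nat) : nat := trunc_log 2 m.
Definition clg (m : nat) : nat := up_log 2 m.

Definition laplace {R : realType} (theta e : R) : R :=
  - (ln theta) / 2 * theta `^ `|e|.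

Definition rice_map {R : realType} (e : R) : nat :=
  if 0 <= e then `|Num.floor (2 * e)|%N
  else `|- Num.floor (2 * e) - 1|%N.

Definition golomb_len (m N : nat) : nat :=
  let j := (N %/ m)%N in
  let k := (N %% m)%N in
  (j.+1 + (if (k < 2 ^ clg m - m)%N then flg m else clg m))%N.

Definition ell {R : realType} (m : nat) (e : R) : nat := golomb_len m (rice_map e).

Definition ell_prec {R : realType} (m rho tau : nat) (e : R) : R :=
  (ell m (e + rho%:R / (2 * tau%:R)))%:R.

Definition Tm (m : nat) : int := (2 ^ clg m)%:Z - m%:Z - 1.

(* Main.v *)
Require Import Defs.
From mathcomp Require Import all_boot all_order all_algebra.
From mathcomp Require Import all_classical all_reals all_analysis.
From mathcomp Require Import ring lra zify measurable_realfun.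
Set Implicit Arguments. Unset Strict Implicit. Unset Printing Implicit Defensive.
Import Order.TTheory GRing.Theory Num.Theory numFieldNormedType.Exports numFieldTopology.Exports.
Local Open Scope ring_scope.

Lemma rice_ge (R : realType) (n : nat) (y : R) : (0 < n)%N ->
  (n <= rice_map y)%N = (n%:R / 2 <= y) || (y < - (n%:R / 2)).
Proof.
move=> n0; rewrite /rice_map.
have n0' : (0 : R) < n%:R by rewrite ltr0n.
case: ifPn => hy.
- have fz : 0 <= Num.floor (2 * y) by rewrite floor_ge0; lra.
  rewrite -lez_nat abszE ger0_norm // floor_ge_int.
  have -> : (y < - (n%:R / 2)) = false by apply/negbTE; rewrite -leNgt; lra.
  rewrite orbF /=; rewrite -[(n%:~R)]pmulrn; apply/idP/idP => h; lra.
- rewrite -ltNge in hy.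
  have fz : Num.floor (2 * y) < 0 by rewrite floor_lt0; lra.
  have -> : (n%:R / 2 <= y) = false by apply/negbTE; rewrite -ltNge; lra.
  rewrite -lez_nat abszE ger0_norm; last lia.
  rewrite /=.
  have -> : (n%:Z <= - Num.floor (2 * y) - 1) = (Num.floor (2 * y) < (- n%:Z)).
    apply/idP/idP => h; lia.
  rewrite floor_lt_int; rewrite rmorphN /= -[(n%:~R)]pmulrn; apply/idP/idP => h; lra.
Qed.
Lemma cnt_min (m T N K : nat) : (0 < m)%N ->
  (\sum_(i < K) ((i * m + T <= N)%N : nat) =
   minn K (if (T <= N)%N then (N-T)%/m + 1 else 0))%N.
Proof.
move=> m0; elim: K => [|K IH]; first by rewrite big_ord0 min0n.
rewrite big_ord_recr /= IH.
case: (leqP T N) => hT.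
  have := divn_eq (N - T) m; have := ltn_pmod (N - T) m0.
  case: (leqP (K * m + T) N) => h /=; nia.
case: (leqP (K * m+T) N) => h /=; lia.
Qed.

Lemma cnt_eq (m T N : nat) : (0 < T)%N -> (T < m)%N ->
  ((if (T <= N)%N then (N-T)%/m + 1 else 0) = N %/ m + (T <= N %% m))%N.
Proof.
move=> T0 Tm.
have m0 : (0 < m)%N by lia.
have := divn_eq (N - T) m; have := ltn_pmod (N - T) m0.
have := divn_eq N m; have := ltn_pmod N m0.
case: (leqP T N) => hT; case: (leqP T (N %% m)) => h /=; nia.
Qed.

Lemma clg_flg (m : nat) : (0 < m)%N -> (forall beta : nat, m <> (2 ^ beta)%N) ->
  clg m = (flg m).+1 /\ (2 ^ flg m < m)%N /\ (m < 2 ^ (flg m).+1)%N.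
Proof.
move=> m0 np.
have h1 := @trunc_logP 2 m isT m0.
have h2 := @trunc_log_ltn 2 m isT.
have h3 : (2 ^ flg m < m)%N.
  rewrite ltn_neqAle h1 andbT; apply/eqP => E; exact: (np (flg m)).
split; last by [].
by rewrite /clg; apply: up_log_eq => //; rewrite h3 ltnW.
Qed.

Lemma golombE (m N : nat) : (0 < m)%N -> (forall beta : nat, m <> (2 ^ beta)%N) ->
  golomb_len m N = (1 + flg m + \sum_(i < N.+1) ((i * m + (2 ^ clg m - m) <= N)%N : nat))%N.
Proof.
move=> m0 np; have [E [h1 h2]] := clg_flg m0 np.
rewrite cnt_min // (minn_idPr _); last first.
  case: ifP => // _; rewrite addn1 ltnS; apply: leq_trans (leq_div _ _) _; lia.
rewrite cnt_eq; last 2 first.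
- by rewrite E; lia.
- by rewrite E expnS; lia.
rewrite /golomb_len E; case: ltnP => /=; lia.
Qed.
Section Int.
Context {R : realType}.
Notation mu := (@lebesgue_measure R).
Variable lam : R.
Hypothesis lam0 : 0 < lam.

Definition ge (x : R) : R := lam * expR (- lam * x).

Lemma cont_e : continuous (fun z : R => expR (- lam * z)).
Proof.
move=> z; apply: continuous_comp; last exact: continuous_expR.
by apply: continuousM => //; apply: (@continuousN _ R^o); exact: cst_continuous.
Qed.

Lemma cont_ge : continuous ge.
Proof.
move=> x; apply: (@continuousM _ R^o (fun=> lam) (fun x => expR (- lam * x))).
  exact: cst_continuous.
exact: cont_e.
Qed.

Lemma int_ge (a : R) : 0 <= a ->
  (\int[mu]_(x in `[a, +oo[) (ge x)%:E = (expR (- lam * a))%:E)%E.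
Proof.
move=> a0.
rewrite (@ge0_continuous_FTC2y _ _ (fun x => - (expR (- lam * x))) _ 0)//.
- by rewrite EFinN oppeK add0e.
- by move=> x _; rewrite /ge mulr_ge0 ?expR_ge0 ?ltW.
- by move=> x; apply: continuous_subspaceT; exact: cont_ge.
- rewrite -oppr0; apply: cvgN.
  rewrite (_ : (fun x => expR (- lam * x)) =
               (fun z => expR (- z)) \o (fun z => lam * z)); last first.
    by apply: eq_fun => x; rewrite mulNr.
  apply: (@cvg_comp _ _ _ _ _ _ (pinfty_nbhs R)); last exact: cvgr_expR.
  exact: gt0_cvgMry.
- by apply: cvgN; apply/cvg_at_right_filter; exact: cont_e.
- move=> x; rewrite in_itv/= andbT => ax.
  rewrite derive1_exponential_pdf; last by rewrite in_itv/= andbT; lra.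
  by rewrite exponential_pdfE ?ltW//; lra.
Qed.

Definition lap (x : R) : R := ge `|x| / 2.

Lemma cont_lap : continuous lap.
Proof.
move=> x; rewrite /lap.
apply: (@continuousM _ R^o (fun x => ge `|x|) (fun=> 2^-1)); last exact: cst_continuous.
apply: continuous_comp; first exact: norm_continuous.
exact: cont_ge.
Qed.

Lemma meas_lap (D : set R) : measurable_fun D (fun x : R => (lap x)%:E).
Proof.
apply/measurable_EFinP; apply: measurable_funTS.
exact: continuous_measurable_fun cont_lap.
Qed.

Lemma lap_ge0 x : 0 <= lap x.
Proof. by rewrite /lap /ge divr_ge0 ?mulr_ge0 ?expR_ge0 ?ltW. Qed.

Lemma int_lap_r (a : R) : 0 <= a ->
  (\int[mu]_(x in `[a, +oo[) (lap x)%:E = (expR (- lam * a) / 2)%:E)%E.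
Proof.
move=> a0.
transitivity (\int[mu]_(x in `[a, +oo[) ((2^-1)%:E * (ge x)%:E))%E.
  apply: eq_integral => x; rewrite inE /= in_itv /= andbT => ax.
  by rewrite /lap ger0_norm; [rewrite -EFinM mulrC | lra].
rewrite ge0_integralZl_EFin //.
- by rewrite int_ge // -EFinM mulrC.
- by move=> x _; rewrite lee_fin /ge mulr_ge0 ?expR_ge0 ?ltW.
- apply/measurable_EFinP; apply: measurable_funTS.
  exact: continuous_measurable_fun cont_ge.
Qed.

Lemma int_lap_l (b : R) : b <= 0 ->
  (\int[mu]_(x in `]-oo, b[) (lap x)%:E = (expR (lam * b) / 2)%:E)%E.
Proof.
move=> b0.
rewrite integral_itv_bndo_bndc; last exact: meas_lap.
rewrite -[b]opprK ge0_integration_by_substitutionNy.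
- transitivity (\int[mu]_(x in `[(- b)%R, +oo[) (lap x)%:E)%E.
    by apply: eq_integral => x _; rewrite /= /lap normrN.
  by rewrite int_lap_r ?opprK ?mulrNN //; lra.
- by move=> x; apply: continuous_subspaceT; exact: cont_lap.
- by move=> x _; exact: lap_ge0.
Qed.

Lemma int_lap : (\int[mu]_x (lap x)%:E = 1)%E.
Proof.
rewrite -(setUv `[0, +oo[%classic) ge0_integral_setU//=; last 4 first.
  exact: measurableC.
  by rewrite setUv; exact: meas_lap.
  by move=> x _; rewrite lee_fin lap_ge0.
  exact/disj_setPCl.
rewrite setCitvr int_lap_r // int_lap_l //.
rewrite !(mulr0,mul0r) expR0 -EFinD; congr EFin; lra.
Qed.

Lemma int_lap_A (a b : R) : 0 <= a -> b <= 0 ->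
  (\int[mu]_(x in `[a, +oo[ `|` `]-oo, b[) (lap x)%:E =
    (expR (- lam * a) / 2 + expR (lam * b) / 2)%:E)%E.
Proof.
move=> a0 b0.
rewrite ge0_integral_setU //=.
- by rewrite int_lap_r // int_lap_l // -EFinD.
- exact: meas_lap.
- by move=> x _; rewrite lee_fin lap_ge0.
- apply/disj_setPS => x [] /=; rewrite !in_itv /= andbT => h1 h2; lra.
Qed.
End Int.

Definition vv {R : realType} (c K q : R) (i : nat) : R :=
  if i is k.+1 then K * q ^+ k else c.

Lemma series_vv {R : realType} (c K q : R) : 0 <= q < 1 ->
  (\sum_(i <oo) (vv c K q i)%:E = (c + K / (1 - q))%:E)%E.
Proof.
move=> /andP[q0 q1].
apply/cvg_lim => //.
under eq_fun do rewrite sumEFin.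
apply: cvg_EFin; first exact: nearW.
rewrite /comp /=.
rewrite -(cvg_shiftS (fun n => \sum_(0 <= i < n) vv c K q i)).
have -> : [sequence \sum_(0 <= i < n.+1) vv c K q i]_n =
          (fun n => c + series (geometric K q) n).
  apply/funext => n /=; rewrite big_nat_recl //=.
apply: cvgD; first exact: cvg_cst.
by apply: cvg_geometric_series; rewrite ger0_norm.
Qed.

Section Main.
Context {R : realType}.
Notation mu := (@lebesgue_measure R).
Variables (lam s : R) (m : nat).
Hypothesis lam0 : 0 < lam.
Hypothesis m0 : (0 < m)%N.
Hypothesis np : forall beta : nat, m <> (2 ^ beta)%N.

Definition Tp := (2 ^ clg m - m)%N.
Definition nk (k : nat) : R := (k * m + Tp)%:R.
Definition Aset (k : nat) : set R :=
  `[nk k / 2 - s, +oo[ `|` `]-oo, - (nk k / 2) - s[.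
Definition hh (i : nat) (x : R) : \bar R :=
  if i is k.+1 then (lap lam x * \1_(Aset k) x)%:E
  else ((1 + flg m)%:R * lap lam x)%:E.

Lemma Tp_gt0 : (0 < Tp)%N.
Proof. have [E [h1 h2]] := clg_flg m0 np; rewrite /Tp E; lia. Qed.

Lemma inAset k x : (x \in Aset k) = (k * m + Tp <= rice_map (x + s))%N.
Proof.
rewrite rice_ge; last by have := Tp_gt0; lia.
rewrite /Aset in_setU !mem_setE /= !in_itv /= andbT -/(nk k).
by apply/orP/orP => -[h|h]; [left|right|left|right]; lra.
Qed.

Lemma pointwise x :
  ((golomb_len m (rice_map (x + s)))%:R * lap lam x)%:E = (\sum_(i <oo) hh i x)%E.
Proof.
set N := rice_map (x + s).
rewrite (@nneseries_split _ _ 0 N.+2); last first.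
  case=> [|k] _; rewrite /hh lee_fin ?indicE.
    by rewrite mulr_ge0 ?lap_ge0.
  by rewrite mulr_ge0 ?lap_ge0 ?ler0n.
rewrite eseries0 ?adde0; last first.
  case=> [//|k]; rewrite add0n ltnS => hk _ /=.
  rewrite indicE; case: (boolP (x \in Aset k)) => [|_]; last by rewrite mulr0.
  rewrite inAset -/N => h.
  have := Tp_gt0; have : (k <= k * m)%N by rewrite leq_pmulr.
  lia.
rewrite add0n big_nat_recl // /= sumEFin -EFinD; congr EFin.
rewrite golombE // natrD mulrDl; congr +%R.
rewrite natr_sum mulr_suml big_mkord; apply: eq_bigr => k _.
rewrite indicE inAset -/N -/Tp; case: (k * m + Tp <= N)%N => /=; by rewrite ?mul1r ?mul0r ?mulr1 ?mulr0.
Qed.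

Hypothesis s0 : 0 <= s.
Hypothesis s1 : s <= 1/2.

Definition ww (i : nat) : R :=
  if i is k.+1 then expR (- lam * (nk k / 2 - s)) / 2 + expR (lam * (- (nk k / 2) - s)) / 2
  else (1 + flg m)%:R.

Lemma meas_lapR (D : set R) : measurable_fun D (lap lam).
Proof. apply: measurable_funTS; exact: continuous_measurable_fun (@cont_lap _ lam). Qed.

Lemma nk_ge1 k : 1 <= nk k.
Proof. rewrite /nk ler1n; have := Tp_gt0; lia. Qed.

Lemma meas_Aset k : measurable (Aset k).
Proof. by apply: measurableU. Qed.

Lemma meas_hh i : measurable_fun [set: R] (hh i).
Proof.
case: i => [|k] /=; apply/measurable_EFinP.
  apply: measurable_funTS; apply: continuous_measurable_fun => x.
  apply: (@continuousM _ R^o (fun=> _) (lap lam)); [exact: cst_continuous | exact: cont_lap].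
apply: measurable_funM; first exact: meas_lapR.
by apply: measurable_indic; exact: measurableU.
Qed.

Lemma hh_ge0 i x : (0 <= hh i x)%E.
Proof.
case: i => [|k]; rewrite /hh lee_fin ?indicE.
  by rewrite mulr_ge0 ?lap_ge0.
by rewrite mulr_ge0 ?lap_ge0 ?ler0n.
Qed.

Lemma int_hh i : (\int[mu]_x hh i x = (ww i)%:E)%E.
Proof.
case: i => [|k] /=.
- rewrite /hh; under eq_integral do rewrite EFinM.
  rewrite ge0_integralZl_EFin //.
  + by rewrite int_lap // mule1.
  + by move=> x _; rewrite lee_fin lap_ge0.
  + exact: meas_lap.
- transitivity (\int[mu]_(x in Aset k) (lap lam x)%:E)%E.
    rewrite [RHS]integral_mkcond; apply: eq_integral => x _.
    by rewrite /hh /= patchE indicE; case: (x \in Aset k); rewrite ?mulr1 ?mulr0.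
  have h1 := nk_ge1 k. have h2 := s0. have h3 := s1.
  rewrite int_lap_A //. all: lra.
Qed.

Lemma total :
  (\int[mu]_x ((golomb_len m (rice_map (x + s)))%:R * lap lam x)%:E = \sum_(i <oo) (ww i)%:E)%E.
Proof.
transitivity (\int[mu]_x (\sum_(i <oo) hh i x))%E.
  by apply: eq_integral => x _; exact: pointwise.
rewrite integral_nneseries //.
- by apply: eq_eseriesr => i _; exact: int_hh.
- by move=> i; exact: meas_hh.
- by move=> i x _; exact: hh_ge0.
Qed.
End Main.

Lemma ww_vv {R : realType} (lam s : R) m i :
  ww lam s m i = vv (1 + flg m)%:R
     (expR (- lam * ((Tp m)%:R / 2)) * (expR (- lam * s) + expR (- lam * - s)) / 2)
     (expR (- lam * (m%:R / 2))) i.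
Proof.
case: i => [//|k] /=.
rewrite /nk natrD natrM.
have e1 : - lam * (((k%:R * m%:R) + (Tp m)%:R) / 2 - s) =
   k%:R * (- lam * (m%:R / 2)) + (- lam * ((Tp m)%:R / 2) + - lam * - s) by ring.
have e2 : lam * (- (((k%:R * m%:R) + (Tp m)%:R) / 2) - s) =
   k%:R * (- lam * (m%:R / 2)) + (- lam * ((Tp m)%:R / 2) + - lam * s) by ring.
rewrite e1 e2 !expRD !expRM_natl.
ring.
Qed.

Theorem theorem2 (R : realType) (theta : R) (rho tau m : nat) :
  0 < theta -> theta < 1 ->
  (0 < rho)%N -> (rho <= tau)%N ->
  (0 < m)%N -> (forall beta : nat, m <> (2 ^ beta)%N) ->
  (\int[@lebesgue_measure R]_(x in [set: R])
      (ell_prec m rho tau x * laplace theta x)%:E =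
   (1 + (flg m)%:R
    + 1 / 2 * (theta `^ (((Tm m)%:~R + 1) / 2) / (1 - theta `^ (m%:R / 2)))
      * (theta `^ (rho%:R / (2 * tau%:R)) + theta `^ (- (rho%:R / (2 * tau%:R)))))%:E)%E.
Proof.
move=> th0 th1 rho0 rt m0 np.
set lam := - ln theta.
have lam0 : 0 < lam by rewrite /lam oppr_gt0 ln_lt0 // th0 th1.
set s : R := rho%:R / (2 * tau%:R).
have tau0 : (0 < tau)%N by lia.
have s0 : 0 <= s by rewrite /s divr_ge0 // mulr_ge0 // ler0n.
have s1 : s <= 1 / 2.
  have hr : (rho%:R : R) <= tau%:R by rewrite ler_nat.
  rewrite /s ler_pdivrMr ?mulr_gt0 ?ltr0n //; lra.
have powE y : theta `^ y = expR (- lam * y).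
  by rewrite /powR gt_eqF // /lam opprK mulrC.
have lapE x : laplace theta x = lap lam x.
  by rewrite /laplace /lap /ge powE -/lam mulrAC.
transitivity (\int[@lebesgue_measure R]_x
   ((golomb_len m (rice_map (x + s)))%:R * lap lam x)%:E)%E.
  by apply: eq_integral => x _; rewrite lapE.
rewrite total //.
have [E [h1 h2]] := clg_flg m0 np.
set q := expR (- lam * (m%:R / 2)).
have q0 : 0 <= q < 1.
  rewrite expR_ge0 /= expR_lt1 mulNr oppr_lt0 mulr_gt0 // divr_gt0 // ltr0n.
  done.
rewrite (eq_eseriesr (fun i _ => congr1 EFin (ww_vv lam s m i))).
rewrite series_vv //; congr EFin.
have TmE : (Tm m)%:~R + 1 = (Tp m)%:R :> R.
  have hT : Tm m = (Tp m)%:Z - 1.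
    rewrite /Tm /Tp E.
    have : (m <= 2 ^ (flg m).+1)%N by lia.
    lia.
  by rewrite hT rmorphB /= subrK.
rewrite TmE !powE natrD -/q.
have q1 : 1 - q != 0 by apply/eqP => h; move: q0; rewrite -(subr0 q); lra.
field.
done.
Qed.
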